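(* Let $H$ be a Hilbert space and let $A=A^*$ be a linear selfadjoint operator in $H$, either bounded or densely defined and unbounded. Let $f\in H$ be such that the equation $Au=f$ is solvable (not necessarily uniquely), and let $y$ be its minimal-norm solution, i.e. the solution with $y\perp N:=\{u: Au=0\}$. For $\delta>0$ let $f_\delta\in H$ satisfy $\|f-f_\delta\|\le\delta$. Let $a=a(\delta)>0$ satisfy $\lim_{\delta\to 0}a(\delta)=0$ and $\lim_{\delta\to0}\frac{\delta}{a(\delta)}=0$. Then the equation $(A+ia(\delta))u=f_\delta$ has a unique solution $u_\delta$, and $$\lim_{\delta\to 0}\|u_\delta-y\|=0.$$
   Context: The problem $Au=f$ is assumed to be ill-posed; the data $f_\delta$ (noisy data) are given while $f$ is not known. *)

(* Defs.v *)
From HB Require Import structures.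
From mathcomp Require Import all_boot all_order all_algebra.
From mathcomp Require Import complex.
From mathcomp Require Import all_classical all_reals all_analysis.
Set Implicit Arguments. Unset Strict Implicit. Unset Printing Implicit Defensive.
Import Order.TTheory GRing.Theory Num.Theory.
Local Open Scope ring_scope.

Section Hilbert.
Variables (R : realType) (H : lmodType R[i]) (ip : H -> H -> R[i]).

Definition is_inner_product : Prop :=
  [/\ forall (c : R[i]) (u v w : H), ip (c *: u + v) w = c * ip u w + ip v w,
      forall u v : H, ip u v = (ip v u)^*%C,
      forall u : H, 0 <= ip u u
    & forall u : H, ip u u = 0 -> u = 0].

Definition hnorm (u : H) : R := Num.sqrt (complex.Re (ip u u)).

Definition ip_complete : Prop :=
  forall s : nat -> H,
    (forall e : R, 0 < e -> exists N : nat, forall m n : nat,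
        (N <= m)%N -> (N <= n)%N -> hnorm (s m - s n) < e) ->
    exists l : H, forall e : R, 0 < e -> exists N : nat, forall n : nat,
        (N <= n)%N -> hnorm (s n - l) < e.

Definition hilbert_space : Prop := is_inner_product /\ ip_complete.

(* a (possibly unbounded) linear operator A with domain D : D is a linear
   subspace and A is linear on D (values of A outside D are irrelevant) *)
Definition linear_operator (D : set H) (A : H -> H) : Prop :=
  [/\ D 0,
      forall (c : R[i]) (u v : H), D u -> D v -> D (c *: u + v)
    & forall (c : R[i]) (u v : H), D u -> D v -> A (c *: u + v) = c *: A u + A v].

Definition dense_domain (D : set H) : Prop :=
  forall (x : H) (e : R), 0 < e -> exists u : H, D u /\ hnorm (x - u) < e.

Definition adjoint_rel (D : set H) (A : H -> H) (v w : H) : Prop :=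
  forall u : H, D u -> ip (A u) v = ip u w.

(* A is densely defined and A = A^* (equal domains and equal actions) *)
Definition selfadjoint (D : set H) (A : H -> H) : Prop :=
  [/\ linear_operator D A, dense_domain D
    & forall v w : H, adjoint_rel D A v w <-> (D v /\ A v = w)].

End Hilbert.

(* Main.v *)
Require Import Defs.
From HB Require Import structures.
From mathcomp Require Import all_boot all_order all_algebra.
From mathcomp Require Import complex.
From mathcomp Require Import all_classical all_reals all_analysis.
From mathcomp Require Import ring lra.
Import Order.TTheory GRing.Theory Num.Theory.
Set Implicit Arguments. Unset Strict Implicit.
Local Open Scope ring_scope.
Local Notation Rc := complex.Re.
Local Notation Ic := complex.Im.

Section Cx.
Variable R : realType.
Lemma cReM (x y : R[i]) : Rc (x * y) = Rc x * Rc y - Ic x * Ic y.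
Proof. by case: x => a b; case: y => c d. Qed.
Lemma cImM (x y : R[i]) : Ic (x * y) = Rc x * Ic y + Ic x * Rc y.
Proof. by case: x => a b; case: y => c d. Qed.
Lemma cReD (x y : R[i]) : Rc (x + y) = Rc x + Rc y.
Proof. by case: x => a b; case: y => c d. Qed.
Lemma cImD (x y : R[i]) : Ic (x + y) = Ic x + Ic y.
Proof. by case: x => a b; case: y => c d. Qed.
Lemma cReN (x : R[i]) : Rc (- x) = - Rc x.
Proof. by case: x => a b. Qed.
Lemma cImN (x : R[i]) : Ic (- x) = - Ic x.
Proof. by case: x => a b. Qed.
Lemma cReJ (x : R[i]) : Rc (x^*%C) = Rc x.
Proof. by case: x => a b. Qed.
Lemma cImJ (x : R[i]) : Ic (x^*%C) = - Ic x.
Proof. by case: x => a b. Qed.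
Lemma c_eq (x y : R[i]) : Rc x = Rc y -> Ic x = Ic y -> x = y.
Proof. by case: x => a b; case: y => c d /= -> ->. Qed.
Lemma cRe0 : Rc (0 : R[i]) = 0. Proof. by []. Qed.
Lemma cIm0 : Ic (0 : R[i]) = 0. Proof. by []. Qed.
Lemma cRe1 : Rc (1 : R[i]) = 1. Proof. by []. Qed.
Lemma cIm1 : Ic (1 : R[i]) = 0. Proof. by []. Qed.
Lemma cReC (a b : R) : Rc (Complex a b) = a. Proof. by []. Qed.
Lemma cImC (a b : R) : Ic (Complex a b) = b. Proof. by []. Qed.
Lemma cJC (a b : R) : (Complex a b)^*%C = Complex a (-b). Proof. by []. Qed.
Lemma cconjD (x y : R[i]) : (x + y)^*%C = x^*%C + y^*%C.
Proof. by case: x => a b; case: y => c d; apply: c_eq => //=; rewrite opprD. Qed.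
Lemma cconjN (x : R[i]) : (- x)^*%C = - x^*%C.
Proof. by case: x => a b. Qed.
Lemma cconjM (x y : R[i]) : (x * y)^*%C = x^*%C * y^*%C.
Proof. case: x => a b; case: y => c d; apply: c_eq; rewrite ?cReM ?cImM /=; ring. Qed.
Lemma cconjK (x : R[i]) : (x^*%C)^*%C = x.
Proof. by case: x => a b /=; rewrite opprK. Qed.
End Cx.

Section IP.
Variables (R : realType) (H : lmodType R[i]) (ip : H -> H -> R[i]).
Hypothesis Hip : is_inner_product ip.

Lemma ipDZl c u v w : ip (c *: u + v) w = c * ip u w + ip v w.
Proof. by case: Hip. Qed.
Lemma ipC u v : ip u v = (ip v u)^*%C.
Proof. by case: Hip. Qed.
Lemma ip0l w : ip 0 w = 0.
Proof.
have := ipDZl 1 0 0 w; rewrite scale1r addr0 mul1r => h.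
by apply: (addrI (ip 0 w)); rewrite addr0 -h.
Qed.
Lemma ipDl u v w : ip (u + v) w = ip u w + ip v w.
Proof. by have := ipDZl 1 u v w; rewrite scale1r mul1r. Qed.
Lemma ipZl (c : R[i]) u w : ip (c *: u) w = c * ip u w.
Proof. by have := ipDZl c u 0 w; rewrite addr0 ip0l addr0. Qed.
Lemma ipNl u w : ip (- u) w = - ip u w.
Proof. by rewrite -scaleN1r ipZl mulN1r. Qed.
Lemma ipBl u v w : ip (u - v) w = ip u w - ip v w.
Proof. by rewrite ipDl ipNl. Qed.
Lemma ipDr u v w : ip w (u + v) = ip w u + ip w v.
Proof. by rewrite ipC ipDl cconjD -!ipC. Qed.
Lemma ipZr (c : R[i]) u w : ip w (c *: u) = c^*%C * ip w u.
Proof. by rewrite ipC ipZl cconjM -ipC. Qed.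
Lemma ip0r w : ip w 0 = 0.
Proof. by rewrite ipC ip0l conjc0. Qed.
Lemma ipNr u w : ip w (- u) = - ip w u.
Proof. by rewrite ipC ipNl cconjN -ipC. Qed.
Lemma ipBr u v w : ip w (u - v) = ip w u - ip w v.
Proof. by rewrite ipDr ipNr. Qed.

Definition N2 u := Rc (ip u u).
Definition P u v := Rc (ip u v).

Lemma ip_ge0 u : 0 <= ip u u.
Proof. by case: Hip. Qed.
Lemma Im_ipuu u : Ic (ip u u) = 0.
Proof. by have := ip_ge0 u; rewrite lecE => /andP [/eqP h _]; rewrite h. Qed.
Lemma N2_ge0 u : 0 <= N2 u.
Proof. by have := ip_ge0 u; rewrite lecE => /andP [_ ]. Qed.
Lemma N2_eq0 u : N2 u = 0 -> u = 0.
Proof.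
move=> h; case: Hip => _ _ _; apply; apply: c_eq; first by rewrite -/(N2 u) h.
by rewrite Im_ipuu.
Qed.
Lemma PC u v : P u v = P v u.
Proof. by rewrite /P ipC cReJ. Qed.
Lemma cImC' u v : Ic (ip u v) = - Ic (ip v u).
Proof. by rewrite ipC cImJ. Qed.
Lemma PDl u v w : P (u + v) w = P u w + P v w.
Proof. by rewrite /P ipDl cReD. Qed.
Lemma PDr u v w : P w (u + v) = P w u + P w v.
Proof. by rewrite /P ipDr cReD. Qed.
Lemma PNl u w : P (- u) w = - P u w.
Proof. by rewrite /P ipNl cReN. Qed.
Lemma PNr u w : P w (- u) = - P w u.
Proof. by rewrite /P ipNr cReN. Qed.
Lemma PBl u v w : P (u - v) w = P u w - P v w.
Proof. by rewrite PDl PNl. Qed.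
Lemma PBr u v w : P w (u - v) = P w u - P w v.
Proof. by rewrite PDr PNr. Qed.
Lemma PZl (c : R[i]) u w : P (c *: u) w = Rc c * P u w - Ic c * Ic (ip u w).
Proof. by rewrite /P ipZl cReM. Qed.
Lemma PZr (c : R[i]) u w : P w (c *: u) = Rc c * P w u + Ic c * Ic (ip w u).
Proof. by rewrite /P ipZr cReM cReJ cImJ mulNr opprK. Qed.
Lemma Puu u : P u u = N2 u. Proof. by []. Qed.
Lemma N2D u v : N2 (u + v) = N2 u + 2 * P u v + N2 v.
Proof.
rewrite /N2 ipDl !ipDr !cReD; have := PC v u; rewrite /P => ->; ring.
Qed.
Lemma N2B u v : N2 (u - v) = N2 u - 2 * P u v + N2 v.
Proof.
rewrite N2D PNr /N2 ipNl ipNr opprK; ring.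
Qed.
Lemma N2N u : N2 (- u) = N2 u.
Proof. by rewrite /N2 ipNl ipNr opprK. Qed.
Lemma N2Z (c : R[i]) u : N2 (c *: u) = (Rc c ^+ 2 + Ic c ^+ 2) * N2 u.
Proof.
rewrite /N2 ipZl ipZr !cReM !cImM cReJ cImJ Im_ipuu -/(N2 u); ring.
Qed.

Lemma N2Zr (t : R) u : N2 (Complex t 0 *: u) = t ^+ 2 * N2 u.
Proof. by rewrite N2Z /= expr0n addr0. Qed.
Lemma PZrr (t : R) u w : P w (Complex t 0 *: u) = t * P w u.
Proof. by rewrite PZr /= mul0r addr0. Qed.

Lemma CS u v : P u v ^+ 2 <= N2 u * N2 v.
Proof.
have [->|v0] := eqVneq v 0.
  by rewrite /P ip0r /N2 ip0r mulr0 expr0n /=.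
have hv : 0 < N2 v.
  rewrite lt_def N2_ge0 andbT; apply/eqP => /N2_eq0 h; by rewrite h eqxx in v0.
have := N2_ge0 (u - (Complex (P u v / N2 v) 0) *: v).
rewrite N2B N2Z PZr /= !mul0r !addr0 expr0n addr0.
have hn : N2 v != 0 by rewrite gt_eqF.
move: hn hv; set t := P u v; set n := N2 v => hn hv h.
have : 0 <= N2 u * n - t ^+ 2.
  have e : N2 u * n - t ^+ 2 = n * (N2 u - 2 * (t / n * t) + (t / n) ^+ 2 * n).
    by field.
  by rewrite e mulr_ge0 // ltW.
by rewrite subr_ge0.
Qed.

Local Notation nm := (hnorm ip).
Lemma nm_ge0 u : 0 <= nm u. Proof. exact: sqrtr_ge0. Qed.
Lemma nm_sq u : nm u ^+ 2 = N2 u. Proof. by rewrite sqr_sqrtr // N2_ge0. Qed.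

Lemma sq_le (x y : R) : 0 <= y -> x ^+ 2 <= y ^+ 2 -> x <= y.
Proof. move=> h1 h2; nra. Qed.

Lemma P_le u v : P u v <= nm u * nm v.
Proof.
apply: sq_le; first by rewrite mulr_ge0 // nm_ge0.
by rewrite exprMn !nm_sq CS.
Qed.
Lemma absP_le u v : `|P u v| <= nm u * nm v.
Proof.
rewrite ler_norml P_le andbT lerNl -PNl.
apply: (le_trans (P_le _ _)). by rewrite /hnorm -/(N2 (-u)) N2N.
Qed.
Lemma Im_ip u v : Ic (ip u v) = P u ((Complex 0 1) *: v).
Proof. by rewrite PZr /=; ring. Qed.
Lemma absIm_le u v : `|Ic (ip u v)| <= nm u * nm v.
Proof.
rewrite Im_ip; apply: (le_trans (absP_le _ _)).
by rewrite /hnorm -/(N2 (_ *: v)) N2Z /= expr0n expr1n /= add0r mul1r.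
Qed.
Lemma nmD u v : nm (u + v) <= nm u + nm v.
Proof.
apply: sq_le; first by rewrite addr_ge0 // nm_ge0.
rewrite nm_sq N2D sqrrD !nm_sq.
have := P_le u v; lra.
Qed.
Lemma nmN u : nm (- u) = nm u.
Proof. by rewrite /hnorm -/(N2 _) N2N. Qed.
Lemma nmB u v : nm (u - v) = nm (v - u).
Proof. by rewrite -nmN opprB. Qed.
Lemma nmZ (c : R[i]) u : nm (c *: u) = Num.sqrt (Rc c ^+ 2 + Ic c ^+ 2) * nm u.
Proof. by rewrite /hnorm -/(N2 _) N2Z sqrtrM // addr_ge0 // sqr_ge0. Qed.
Lemma nmZi (t : R) u : nm (Complex 0 t *: u) = `|t| * nm u.
Proof. by rewrite nmZ /= expr0n /= add0r sqrtr_sqr. Qed.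
Lemma nmZr (t : R) u : nm (Complex t 0 *: u) = `|t| * nm u.
Proof. by rewrite nmZ /= expr0n /= addr0 sqrtr_sqr. Qed.
Lemma nm_eq0 u : nm u = 0 -> u = 0.
Proof. by move=> h; apply: N2_eq0; rewrite -nm_sq h expr0n. Qed.
Lemma nm0 : nm 0 = 0.
Proof. by rewrite /hnorm ip0l sqrtr0. Qed.

End IP.

Section Reals.
Variable R : realType.
Lemma small0 (x : R) : (forall e, 0 < e -> `|x| < e) -> x = 0.
Proof.
move=> h; apply/eqP; apply/negPn/negP => hx.
by have := h `|x|; rewrite normr_gt0 hx ltxx => /(_ isT).
Qed.
Lemma quad0 (p q : R) : 0 <= q -> (forall t, 0 <= 2 * t * p + t ^+ 2 * q) -> p = 0.
Proof.
move=> hq h.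
have hs : 0 < (q + 1)^-1 by rewrite invr_gt0; lra.
set s := (q + 1)^-1 in hs.
have e : s * (q + 1) = 1 by rewrite mulVf //; apply/eqP; lra.
have := h (- p * s).
have hsq : s * q = 1 - s by lra.
move=> h1.
have h2 : 0 <= p ^+ 2 * s * (s * q - 2) by nra.
rewrite hsq in h2.
have h3 : p ^+ 2 * s <= 0 by nra.
have : p ^+ 2 <= 0 by nra.
move=> h4. nra.
Qed.
Lemma nat_small (r : R) : 0 < r -> exists N : nat, forall n, (N <= n)%N -> (n.+1%:R)^-1 < r.
Proof.
move=> hr; exists (Num.Def.archi_bound (r^-1)) => n hn.
have h0 : 0 <= r^-1 by rewrite invr_ge0 ltW.
have h1 := archi_boundP h0.
rewrite invf_plt ?posrE ?ltr0n //.
apply: (lt_le_trans h1); rewrite ler_nat; exact: leqW.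
Qed.
End Reals.

Section Op.
Variables (R : realType) (H : lmodType R[i]) (ip : H -> H -> R[i]).
Variables (D : set H) (A : H -> H).
Hypothesis Hip : is_inner_product ip.
Hypothesis HL : linear_operator D A.
Hypothesis HSA : forall v w : H, adjoint_rel ip D A v w <-> (D v /\ A v = w).
Local Notation nm := (hnorm ip).

Lemma D0 : D 0. Proof. by case: HL. Qed.
Lemma DDZ (c : R[i]) u v : D u -> D v -> D (c *: u + v). Proof. by case: HL => _ h _; apply: h. Qed.
Lemma ADZ (c : R[i]) u v : D u -> D v -> A (c *: u + v) = c *: A u + A v.
Proof. by case: HL => _ _ h; apply: h. Qed.
Lemma DD u v : D u -> D v -> D (u + v).
Proof. by move=> hu hv; have := DDZ 1 hu hv; rewrite scale1r. Qed.
Lemma DZ (c : R[i]) u : D u -> D (c *: u).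
Proof. by move=> hu; have := DDZ c hu D0; rewrite addr0. Qed.
Lemma DN u : D u -> D (- u).
Proof. by move=> hu; rewrite -scaleN1r; apply: DZ. Qed.
Lemma DB u v : D u -> D v -> D (u - v).
Proof. by move=> hu hv; apply: DD => //; apply: DN. Qed.
Lemma A0 : A 0 = 0.
Proof.
have := ADZ 1 D0 D0; rewrite !scale1r addr0 => h.
by apply: (addrI (A 0)); rewrite addr0 -h.
Qed.
Lemma AD u v : D u -> D v -> A (u + v) = A u + A v.
Proof. by move=> hu hv; have := ADZ 1 hu hv; rewrite !scale1r. Qed.
Lemma AZ (c : R[i]) u : D u -> A (c *: u) = c *: A u.
Proof. by move=> hu; have := ADZ c hu D0; rewrite !addr0 A0 addr0. Qed.
Lemma AN u : D u -> A (- u) = - A u.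
Proof. by move=> hu; rewrite -scaleN1r AZ // scaleN1r. Qed.
Lemma AB u v : D u -> D v -> A (u - v) = A u - A v.
Proof. by move=> hu hv; rewrite AD ?AN //; apply: DN. Qed.

Lemma Asym u v : D u -> D v -> ip (A u) v = ip u (A v).
Proof. by move=> hu hv; have [_ /(_ (conj hv erefl))] := HSA v (A v); apply. Qed.
Lemma Aclos v w : (forall u, D u -> ip (A u) v = ip u w) -> D v /\ A v = w.
Proof. by move=> h; apply/HSA. Qed.
Lemma ImAuu u : D u -> Ic (ip (A u) u) = 0.
Proof.
move=> hu; have := Asym hu hu; rewrite (ipC Hip u) => h.
have : Ic (ip (A u) u) = - Ic (ip (A u) u) by rewrite {1}h cImJ.
lra.
Qed.

Definition T (a : R) u := A u + Complex 0 a *: u.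

Lemma TD a u v : D u -> D v -> T a (u + v) = T a u + T a v.
Proof. by move=> hu hv; rewrite /T AD // scalerDr addrACA. Qed.
Lemma TZ a (c : R[i]) u : D u -> T a (c *: u) = c *: T a u.
Proof. by move=> hu; rewrite /T AZ // scalerDr !scalerA (mulrC c). Qed.
Lemma TN a u : D u -> T a (- u) = - T a u.
Proof. by move=> hu; rewrite -scaleN1r TZ // scaleN1r. Qed.
Lemma TB a u v : D u -> D v -> T a (u - v) = T a u - T a v.
Proof. by move=> hu hv; rewrite TD ?TN //; apply: DN. Qed.

Lemma ImTuu a u : D u -> Ic (ip (T a u) u) = a * N2 ip u.
Proof.
move=> hu; rewrite /T (ipDl Hip) cImD ImAuu // (ipZl Hip) cImM /= Im_ipuu //.
rewrite /N2; ring.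
Qed.

Lemma Tlow a u : 0 < a -> D u -> a * nm u <= nm (T a u).
Proof.
move=> ha hu.
have h := absIm_le Hip (T a u) u.
rewrite ImTuu // -(nm_sq Hip) in h.
have h0 := nm_ge0 ip u; have h1 := nm_ge0 ip (T a u).
have [hz|hp] := eqVneq (nm u) 0.
  by rewrite hz mulr0.
have hp' : 0 < nm u by rewrite lt_def hp h0.
rewrite ger0_norm in h; last by apply: mulr_ge0; [exact: ltW | exact: sqr_ge0].
nra.
Qed.


Definition cvgH (s : nat -> H) l := forall e, 0 < e -> exists N, forall n, (N <= n)%N -> nm (s n - l) < e.
Definition cauchyH (s : nat -> H) := forall e, 0 < e -> exists N, forall m n, (N <= m)%N -> (N <= n)%N -> nm (s m - s n) < e.

Lemma cvg_small s l K e : cvgH s l -> 0 < e -> 0 <= K ->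
  exists N, forall n, (N <= n)%N -> K * nm (s n - l) < e.
Proof.
move=> hs he hK.
have hK1 : 0 < K + 1 by lra.
have [N hN] := hs (e / (K + 1)) (divr_gt0 he hK1).
exists N => n hn; have := hN n hn; rewrite ltr_pdivlMr // => h.
have := nm_ge0 ip (s n - l); nra.
Qed.

Lemma ip_small (z : R[i]) : (forall e, 0 < e -> exists x1 y1 x2 y2,
  z = ip x1 y1 + ip x2 y2 /\ nm x1 * nm y1 + nm x2 * nm y2 < e) -> z = 0.
Proof.
move=> h; apply: c_eq; apply: small0 => e he;
  have [x1 [y1 [x2 [y2 [-> hl]]]]] := h e he.
- rewrite cReD; apply: (le_lt_trans (ler_normD _ _)).
  apply: (le_lt_trans _ hl); apply: lerD; exact: absP_le.
- rewrite cImD; apply: (le_lt_trans (ler_normD _ _)).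
  apply: (le_lt_trans _ hl); apply: lerD; exact: absIm_le.
Qed.

Lemma closedA s u h : (forall n, D (s n)) -> cvgH s u -> cvgH (fun n => A (s n)) h ->
  D u /\ A u = h.
Proof.
move=> hD hs hA; apply: Aclos => v hv.
apply/eqP; rewrite -subr_eq0; apply/eqP; apply: ip_small => e he.
have he2 : 0 < e / 2 by lra.
have [N1 hN1] := cvg_small hs he2 (nm_ge0 ip (A v)).
have [N2 hN2] := cvg_small hA he2 (nm_ge0 ip v).
pose n := maxn N1 N2.
exists (A v), (u - s n), v, (A (s n) - h); split.
  by rewrite (ipBr Hip) (ipBr Hip) (Asym hv (hD n)) addrA subrK.
rewrite (nmB Hip u (s n)); have := hN1 n (leq_maxl _ _); have := hN2 n (leq_maxr _ _); lra.
Qed.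


Lemma zid (p q r s : H) : p - (q - s) = p + r - q - (r - s).
Proof.
by rewrite !opprB !addrA (addrAC p r) (addrAC _ r s) addrK addrAC.
Qed.

Lemma sq_lt (x y : R) : 0 <= y -> x ^+ 2 < y ^+ 2 -> x < y.
Proof. move=> h1 h2; nra. Qed.

Lemma Re2 : Rc (2%:R : R[i]) = 2. Proof. by []. Qed.
Lemma Im2 : Ic (2%:R : R[i]) = 0. Proof. by rewrite /= addr0. Qed.

Hypothesis Hc : ip_complete ip.

Lemma exists_sol a g : 0 < a -> exists u, D u /\ T a u = g.
Proof.
move=> ha.
pose S := [set r : R | exists u, D u /\ r = N2 ip (T a u - g)]%classic.
have hS : has_inf S.
  split; first by exists (N2 ip (T a 0 - g)); exists 0; split => //; exact: D0.
  by exists 0 => r [u [_ ->]]; exact: N2_ge0.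
pose m := inf S.
have hm : forall u, D u -> m <= N2 ip (T a u - g).
  by move=> u hu; apply: (ge_inf (proj2 hS)); exists u.
have hm0 : 0 <= m.
  by apply: lb_le_inf (proj1 hS) _ => r [u [_ ->]]; exact: N2_ge0.
have : forall n : nat, exists u, D u /\ N2 ip (T a u - g) < m + (n.+1%:R)^-1.
  move=> n; have hn : 0 < (n.+1%:R : R)^-1 by rewrite invr_gt0 ltr0n.
  have [r [u [hu ->]] hr] := inf_adherent hn hS.
  by exists u.
move=> /boolp.choice [us hus].
have par : forall n k, N2 ip (T a (us n - us k)) < 2 * (n.+1%:R)^-1 + 2 * (k.+1%:R)^-1.
  move=> n k.
  have [hDn hn] := hus n; have [hDk hk] := hus k.
  set x := T a (us n) - g in hn; set x' := T a (us k) - g in hk.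
  have e1 : T a (us n - us k) = x - x'.
    by rewrite TB // /x /x' opprB addrA subrK.
  pose w := (2%:R : R[i])^-1 *: (us n + us k).
  have hw : D w by apply: DZ; apply: DD.
  have e2 : x + x' = (2%:R : R[i]) *: (T a w - g).
    rewrite /w TZ; last exact: DD hDn hDk.
    rewrite TD // scalerBr scalerA mulfV ?pnatr_eq0 // scale1r.
    by rewrite scaler_nat mulr2n /x /x' opprD addrACA.
  have h4 : N2 ip (x + x') = 4 * N2 ip (T a w - g).
    by rewrite e2 (N2Z Hip) Re2 Im2; congr (_ * _); rewrite expr0n addr0 /=; lra.
  have hw' := hm w hw.
  have hD := N2D Hip x x'; have hB := N2B Hip x x'.
  rewrite e1; move: hn hk; set i1 := (n.+1%:R : R)^-1; set i2 := (k.+1%:R : R)^-1 => hn hk; lra.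
have cau1 : cauchyH us.
  move=> e he.
  have hr : 0 < (a * e) ^+ 2 / 4 by apply: divr_gt0; [apply: exprn_gt0; exact: mulr_gt0|lra].
  have [N hN] := nat_small hr.
  exists N => p q hp hq.
  have h1 := par p q; have h2 := hN p hp; have h3 := hN q hq.
  move: h1 h2 h3; set i1 := (p.+1%:R : R)^-1; set i2 := (q.+1%:R : R)^-1 => h1 h2 h3.
  have hDp := (hus p).1; have hDq := (hus q).1.
  have hT := Tlow ha (DB hDp hDq).
  have h5 : nm (T a (us p - us q)) < a * e.
    apply: sq_lt; first by apply: mulr_ge0; lra.
    rewrite (nm_sq Hip); lra.
  have := nm_ge0 ip (us p - us q); nra.
have cau2 : cauchyH (fun n => T a (us n)).
  move=> e he.
  have hr : 0 < e ^+ 2 / 4 by apply: divr_gt0; [apply: exprn_gt0|lra].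
  have [N hN] := nat_small hr.
  exists N => p q hp hq.
  have h1 := par p q; have h2 := hN p hp; have h3 := hN q hq.
  move: h1 h2 h3; set i1 := (p.+1%:R : R)^-1; set i2 := (q.+1%:R : R)^-1 => h1 h2 h3.
  have hDp := (hus p).1; have hDq := (hus q).1.
  rewrite -TB //.
  apply: sq_lt; first by lra.
  rewrite (nm_sq Hip); lra.
have [us' hus'] := Hc cau1.
have [h hh] := Hc cau2.
have hA : cvgH (fun n => A (us n)) (h - Complex 0 a *: us').
  move=> e he; have he2 : 0 < e / 2 by lra.
  have [N1 hN1] := hh _ he2.
  have [N2' hN2] := cvg_small hus' he2 (ltW ha).
  exists (maxn N1 N2') => n hn.
  have e3 : A (us n) - (h - Complex 0 a *: us') =
      (T a (us n) - h) - Complex 0 a *: (us n - us').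
    by rewrite /T scalerBr (zid _ _ (Complex 0 a *: us n)).
  rewrite e3; apply: (le_lt_trans (nmD Hip _ _)).
  rewrite (nmN Hip) (nmZi Hip) ger0_norm ?(ltW ha) //.
  have := hN1 n (leq_trans (leq_maxl _ _) hn).
  have := hN2 n (leq_trans (leq_maxr _ _) hn).
  lra.
have [hDu hAu] := closedA (fun n => (hus n).1) hus' hA.
have hTu : T a us' = h by rewrite /T hAu subrK.
have hmin : N2 ip (h - g) <= m.
  apply/ler_addgt0Pr => eps heps.
  have heps2 : 0 < eps / 2 by lra.
  have [N1 hN1] := nat_small heps2.
  have hK : 0 <= 2 * m + 5 by lra.
  have [N2' hN2] := cvg_small hh heps2 hK.
  have [N3 hN3] := hh 1 ltr01.
  pose n := maxn N1 (maxn N2' N3).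
  have hn1 := hN1 n (leq_maxl _ _).
  have hn2 := hN2 n (leq_trans (leq_maxl _ _) (leq_maxr _ _)).
  have hn3 := hN3 n (leq_trans (leq_maxr _ _) (leq_maxr _ _)).
  have [_ hn] := hus n.
  have hi1 : (n.+1%:R : R)^-1 <= 1 by rewrite invf_le1 ?ler1n ?ltr0n.
  move: hn1 hn hi1; set i1 := (n.+1%:R : R)^-1 => hn1 hn hi1.
  have e4 : h - g = (h - T a (us n)) + (T a (us n) - g) by rewrite addrA subrK.
  have hle : nm (h - g) <= nm (T a (us n) - h) + nm (T a (us n) - g).
    by rewrite {1}e4 (nmB Hip (T a (us n)) h); apply: nmD.
  move: hle hn2 hn3 hn; set d := nm (T a (us n) - h); set t := nm (T a (us n) - g).
  move=> hle hn2 hn3 hn.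
  have hd0 : 0 <= d := nm_ge0 ip _.
  have ht0 : 0 <= t := nm_ge0 ip _.
  have htsq : t ^+ 2 < m + 1 by rewrite /t (nm_sq Hip); lra.
  have ht : t <= m + 2 by nra.
  have hsq : N2 ip (h - g) <= (d + t) ^+ 2.
    rewrite -(nm_sq Hip); apply: lerXn2r; rewrite ?nnegrE ?nm_ge0 //; lra.
  have hdt : (d + t) ^+ 2 <= d * (2 * m + 5) + t ^+ 2 by nra.
  have : t ^+ 2 < m + i1 by rewrite /t (nm_sq Hip).
  lra.
have hvar : forall v, D v -> N2 ip (h - g) <= N2 ip (h - g + T a v).
  move=> v hv; have := hm _ (DD hDu hv); rewrite TD // hTu addrAC => hh'; lra.
move: hmin hvar; set z := h - g => hmin hvar.
have hP : forall v, D v -> P ip z (T a v) = 0.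
  move=> v hv; apply: (quad0 (N2_ge0 Hip (T a v))) => t.
  have := hvar _ (DZ (Complex t 0) hv).
  rewrite TZ // (N2D Hip) (PZrr Hip) (N2Zr Hip).
  lra.
have hI : forall v, D v -> ip z (T a v) = 0.
  move=> v hv; apply: c_eq; first by rewrite -/(P ip z _) hP.
  rewrite (Im_ip Hip) -(TZ a (Complex 0 1) hv) hP //; exact: DZ.
have [hDz hAz] : D z /\ A z = Complex 0 a *: z.
  apply: Aclos => v hv.
  have hT : ip (T a v) z = 0 by rewrite (ipC Hip) hI // conjc0.
  rewrite /T (ipDl Hip) (ipZl Hip) in hT.
  rewrite (ipZr Hip).
  have -> : (Complex 0 a)^*%C = - Complex 0 a by apply: c_eq; rewrite /= ?oppr0.
  rewrite mulNr; apply/eqP; rewrite -addr_eq0; exact/eqP.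
have hz0 : z = 0.
  apply: (N2_eq0 Hip).
  have := ImAuu hDz; rewrite hAz (ipZl Hip) cImM /= (Im_ipuu Hip) mul0r add0r -/(N2 ip z) => h0.
  by move/eqP: h0; rewrite mulf_eq0 gt_eqF //= => /eqP.
exists us'; split => //; rewrite hTu; apply/eqP; rewrite -subr_eq0; apply/eqP; exact: hz0.
Qed.

End Op.

Section Main.
Variables (R : realType) (H : lmodType R[i]) (ip : H -> H -> R[i]).
Variables (D : set H) (A : H -> H) (y : H) (v : R -> H).
Hypothesis Hip : is_inner_product ip.
Hypothesis HL : linear_operator D A.
Hypothesis HSA : forall v w : H, adjoint_rel ip D A v w <-> (D v /\ A v = w).
Hypothesis Hc : ip_complete ip.
Hypothesis Hy : D y.
Hypothesis Horth : forall u, D u -> A u = 0 -> ip y u = 0.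
Hypothesis Hv : forall b, 0 < b -> D (v b) /\ T A b (v b) = y.
Local Notation nm := (hnorm ip).
Local Notation TT := (T A).

Definition w b := Complex 0 b *: v b.
Local Notation psi b := (N2 ip (w b)).

Lemma Dw b : 0 < b -> D (w b).
Proof. by move=> hb; apply: (DZ HL); exact: (Hv hb).1. Qed.

Lemma Av b : 0 < b -> A (v b) = y - Complex 0 b *: v b.
Proof. by move=> hb; have [_ <-] := Hv hb; rewrite /T addrK. Qed.

Lemma ci_sub a b : Complex 0 (b - a) = Complex 0 b - Complex 0 a :> R[i].
Proof. by apply: c_eq; rewrite /= ?subr0. Qed.

Lemma mono a b : 0 < a -> a < b -> N2 ip (w a - w b) <= psi b - psi a.
Proof.
move=> ha hab; have hb : 0 < b by lra.
have [hp _] := Hv ha; have [hq _] := Hv hb.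
set p := v a in hp *; set q := v b in hq *.
pose r := p - q.
have hr : D r by apply: (DB HL).
have eAr : A r = w b - w a.
  rewrite /r (AB HL) // /p /q !Av // /w.
  by rewrite opprB addrC addrA subrK.
have eX : Complex 0 (b - a) *: p = A r + Complex 0 b *: r.
  rewrite eAr /r /w ci_sub scalerBl scalerBr -/p -/q.
  by rewrite [RHS]addrC addrA subrK.
have hI0 : Ic (ip r (A r)) = 0 by rewrite (cImC' Hip) (ImAuu Hip HSA hr) oppr0.
have hPX : P ip (Complex 0 (b - a) *: p) (A r) = N2 ip (A r).
  by rewrite eX (PDl Hip) (PZl Hip) /= hI0 mul0r mulr0 subr0 addr0.
rewrite (PZl Hip) /= mul0r sub0r in hPX.
have hPw : P ip (w a) (A r) = - (a * Ic (ip p (A r))).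
  by rewrite /w (PZl Hip) /= mul0r sub0r.
have hwb : w b = w a + A r by rewrite eAr addrC subrK.
have e5 : w a - w b = - A r by rewrite hwb opprD addrA subrr add0r.
rewrite e5 (N2N Hip) hwb (N2D Hip) hPw.
have := N2_ge0 Hip (A r).
nra.
Qed.

Lemma mono' a b : 0 < a -> a <= b -> N2 ip (w a - w b) <= psi b - psi a.
Proof.
move=> ha; rewrite le_eqVlt => /orP [/eqP <-|hab]; last exact: mono.
by rewrite subrr subrr /N2 (ip0l Hip).
Qed.

Lemma psi_le a b : 0 < a -> a <= b -> psi a <= psi b.
Proof. by move=> ha hab; have := mono' ha hab; have := N2_ge0 Hip (w a - w b); lra. Qed.

Lemma nm_w b : 0 < b -> nm (w b) <= nm y.
Proof.
move=> hb; have [hD hT] := Hv hb.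
have := Tlow Hip HSA hb hD; rewrite hT /w (nmZi Hip) ger0_norm //; exact: ltW.
Qed.

Lemma nmAw b : 0 < b -> nm (A (w b)) <= 2 * b * nm y.
Proof.
move=> hb; have [hD _] := Hv hb.
rewrite /w (AZ HL) // Av // scalerBr -/(w b).
apply: (le_trans (nmD Hip _ _)); rewrite (nmN Hip) !(nmZi Hip) ger0_norm ?(ltW hb) //.
have := nm_w hb; rewrite /w (nmZi Hip) ger0_norm ?(ltW hb) //; have := nm_ge0 ip (v b); nra.
Qed.

Lemma orth b w0 : 0 < b -> D w0 -> A w0 = 0 -> ip (w b) w0 = 0.
Proof.
move=> hb hD0 hA0; have [hD hT] := Hv hb.
have := Horth hD0 hA0; rewrite -hT /T (ipDl Hip) (Asym HSA hD hD0) hA0 (ip0r Hip) add0r.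
by rewrite /w.
Qed.

Lemma key eps : 0 < eps -> exists2 b0, 0 < b0 & psi b0 < eps.
Proof.
move=> he.
pose bs (n : nat) := (n.+1%:R : R)^-1.
have bs_gt0 n : 0 < bs n by rewrite invr_gt0 ltr0n.
have bs_le m n : (n <= m)%N -> bs m <= bs n.
  by move=> h; rewrite lef_pV2 ?posrE ?ltr0n // ler_nat.
pose S := [set r : R | exists n, r = psi (bs n)]%classic.
have hS : has_inf S.
  split; first by exists (psi (bs 0)); exists 0%N.
  by exists (0 : R) => r [n ->]; exact: N2_ge0.
pose L := inf S.
have hL n : L <= psi (bs n) by apply: (ge_inf (proj2 hS)); exists n.
pose W n := w (bs n).
have cau : cauchyH ip W.
  move=> e he'.
  have he2 : 0 < e ^+ 2 by apply: exprn_gt0.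
  have [r [n0 ->] hr] := inf_adherent he2 hS.
  exists n0 => m n hm hn.
  suff : N2 ip (W m - W n) < e ^+ 2.
    by rewrite -(nm_sq Hip) => h; apply: sq_lt => //; exact: ltW.
  wlog hmn : m n hm hn / (n <= m)%N.
    move=> hw; have [h|h] := leqP n m; first exact: hw.
    rewrite -(N2N Hip) opprB; apply: hw => //; exact: ltnW.
  have := mono' (bs_gt0 m) (bs_le _ _ hmn).
  have := psi_le (bs_gt0 n) (bs_le _ _ hn).
  have := hL m.
  rewrite /W; lra.
have [winf hwinf] := Hc cau.
have hAW : cvgH ip (fun n => A (W n)) 0.
  move=> e he'.
  have hy0 := nm_ge0 ip y.
  have hr : 0 < e / (2 * nm y + 1) by apply: divr_gt0; lra.
  have [N hN] := nat_small hr.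
  exists N => n hn; rewrite subr0.
  have h1 := nmAw (bs_gt0 n).
  have := hN n hn; rewrite ltr_pdivlMr; last by lra.
  rewrite -/(bs n) /W.
  have := bs_gt0 n; nra.
have [hDinf hAinf] := closedA Hip HSA (fun n => Dw (bs_gt0 n)) hwinf hAW.
have hy0 := nm_ge0 ip y.
have [N hN] := cvg_small hwinf he hy0.
exists (bs N) => //.
have e1 : psi (bs N) = P ip (W N) (W N - winf).
  rewrite (PBr Hip) /P (orth (bs_gt0 N) hDinf hAinf) /= subr0 //.
rewrite e1; apply: (le_lt_trans (P_le Hip _ _)).
have := nm_w (bs_gt0 N); have := hN N (leqnn N); have := nm_ge0 ip (W N - winf).
rewrite /W; nra.
Qed.

End Main.

Unset Implicit Arguments.
Local Open Scope classical_set_scope.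

Theorem theorem1 (R : realType) (H : lmodType R[i]) (ip : H -> H -> R[i])
    (D : set H) (A : H -> H) (f y : H) (f_ : R -> H) (a : R -> R) :
  hilbert_space ip ->
  selfadjoint ip D A ->
  (* y is the minimal-norm solution of A u = f : a solution orthogonal to N(A) *)
  D y -> A y = f ->
  (forall u : H, D u -> A u = 0 -> ip y u = 0) ->
  (forall d : R, 0 < d -> hnorm ip (f - f_ d) <= d) ->
  (forall d : R, 0 < d -> 0 < a d) ->
  a d @[d --> 0^'+] --> 0 ->
  d / a d @[d --> 0^'+] --> 0 ->
  (forall d : R, 0 < d ->
     exists! u : H, D u /\ A u + (Complex 0 (a d)) *: u = f_ d) /\
  (forall u_ : R -> H,
     (forall d : R, 0 < d -> D (u_ d) /\ A (u_ d) + (Complex 0 (a d)) *: u_ d = f_ d) ->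
     hnorm ip (u_ d - y) @[d --> 0^'+] --> 0).
Proof.
move=> [Hip Hc] [HL _ HSA] Dy Ayf Horth Hf Ha0 Hacvg Hdacvg.
split.
  move=> d hd.
  have [u [hu hTu]] := exists_sol Hip HL HSA Hc (f_ d) (Ha0 d hd).
  exists u; split => // u' [hu' hTu'].
  have hT : T A (a d) (u - u') = 0.
    by rewrite (TB HL) // hTu; rewrite /T hTu' subrr.
  have := Tlow Hip HSA (Ha0 d hd) (DB HL hu hu'); rewrite hT (nm0 Hip) => h.
  have h0 := nm_ge0 ip (u - u').
  have : hnorm ip (u - u') = 0 by have := Ha0 d hd; nra.
  move/(nm_eq0 Hip)/eqP; rewrite subr_eq0 => /eqP //.
move=> u_ hu_.
have : forall b : R, exists v, 0 < b -> D v /\ T A b v = y.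
  move=> b; case: (ltrP 0 b) => hb.
    by have [v hv] := exists_sol Hip HL HSA Hc y hb; exists v.
  by exists (0 : H).
move=> /boolp.choice [v hv].
have est : forall d, 0 < d -> hnorm ip (u_ d - y) <= d / a d + hnorm ip (w v (a d)).
  move=> d hd; have had := Ha0 d hd; have [hud hTud] := hu_ d hd.
  have hTud' : T A (a d) (u_ d) = f_ d := hTud.
  have [hvD hvT] := hv _ had.
  have hwD := Dw HL hv had.
  pose e := u_ d - y + w v (a d).
  have hDe : D e by apply: (DD HL) => //; apply: (DB HL).
  have hTe : T A (a d) e = f_ d - f.
    have hDuy : D (u_ d - y) by apply: (DB HL).
    rewrite /e (TD HL (a d) hDuy hwD) (TB HL (a d) hud Dy) hTud' /w (TZ HL _ _ hvD) hvT.
    by rewrite /T Ayf opprD addrA subrK.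
  have hlow := Tlow Hip HSA had hDe; rewrite hTe (nmB Hip) in hlow.
  have hfd := Hf d hd.
  have he : hnorm ip e <= d / a d by rewrite ler_pdivlMr //; lra.
  have -> : u_ d - y = e - w v (a d) by rewrite /e addrK.
  apply: (le_trans (nmD Hip _ _)); rewrite (nmN Hip); lra.
apply/cvgrPdist_lt => eps heps.
have he2 : 0 < eps / 2 by lra.
have he22 : 0 < (eps / 2) ^+ 2 by apply: exprn_gt0.
have [b0 hb0 hpsi] := key Hip HL HSA Hc Horth hv he22.
move/cvgrPdist_lt : Hacvg => /(_ b0 hb0) Ha1.
move/cvgrPdist_lt : Hdacvg => /(_ _ he2) Hd1.
near=> d.
have hd : 0 < d by near: d; exact: nbhs_right_gt.
have h1 : `|0 - a d| < b0 by near: d; exact: Ha1.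
have h2 : `|0 - d / a d| < eps / 2 by near: d; exact: Hd1.
have had := Ha0 d hd.
rewrite sub0r normrN ger0_norm in h1; last exact: ltW.
rewrite sub0r normrN ger0_norm in h2; last by apply: divr_ge0; apply: ltW.
have hps := psi_le Hip HL HSA hv had (ltW h1).
have hw : hnorm ip (w v (a d)) < eps / 2.
  apply: sq_lt; first exact: ltW.
  rewrite (nm_sq Hip); lra.
have := est d hd.
rewrite sub0r normrN ger0_norm; last exact: nm_ge0.
lra.
Unshelve. all: by end_near.
Qed.
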